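(* Let $X=\{X_t\}_{t\ge0}$ be a continuous-time random walk on $\mathbb{Z}^d$ started at the origin, and let $\bm{p}_t(w)=\mathrm{P}\{X_t=w\}$ for $t\ge0$, $w\in\mathbb{Z}^d$. Then for all $t,s\ge0$ and $x,z\in\mathbb{Z}^d$, \[\sum_{y\in\mathbb{Z}^d}[\bm{p}_t(x-y)\bm{p}_s(y-z)]^2\le[\bm{p}_{t+s}(x-z)]^2.\] *)

(* Defs.v *)
From HB Require Import structures.
From mathcomp Require Import all_boot all_order all_algebra.
From mathcomp Require Import all_classical all_reals all_analysis.
Set Implicit Arguments. Unset Strict Implicit. Unset Printing Implicit Defensive.
Import Order.TTheory GRing.Theory Num.Theory.
Local Open Scope classical_set_scope.
Local Open Scope ring_scope.
Local Open Scope ereal_scope.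

Definition is_jump_distr (R : realType) (d : nat) (mu : 'rV[int]_d -> R) : Prop :=
  (forall w, (0 <= mu w)%R) /\ \esum_(y in [set: 'rV[int]_d]) (mu y)%:E = 1.

(* n-fold convolution power of mu: law of the position after n jumps
   of the discrete-time walk started at the origin. *)
Fixpoint conv_pow (R : realType) (d : nat) (mu : 'rV[int]_d -> R) (n : nat)
    (w : 'rV[int]_d) : \bar R :=
  match n with
  | 0%N => ((w == 0)%:R)%:E
  | m.+1 => \esum_(y in [set: 'rV[int]_d]) (conv_pow mu m (w - y)%R * (mu y)%:E)
  end.

(* Transition function p_t(w) = P{X_t = w} of the continuous-time random walk
   on Z^d started at 0, with jump rate lam > 0 and jump distribution mu:
   X_t = S_{N_t}, N a Poisson process of rate lam independent of the
   discrete walk S with increments mu. *)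
Definition ctrw_p (R : realType) (d : nat) (lam : R) (mu : 'rV[int]_d -> R)
    (t : R) (w : 'rV[int]_d) : R :=
  fine (\esum_(n in [set: nat])
          ((expR (- (lam * t)) * (lam * t) ^+ n / (n`!)%:R)%R%:E * conv_pow mu n w)).

(* Main.v *)
Require Import Defs.
From HB Require Import structures.
From mathcomp Require Import all_boot all_order all_algebra.
From mathcomp Require Import all_classical all_reals all_analysis.
From mathcomp Require Import ring lra zify.
Import Order.TTheory GRing.Theory Num.Theory.
Local Open Scope classical_set_scope.
Local Open Scope ring_scope.

Section H.
Local Open Scope ereal_scope.
Context {R : realType}.

Lemma esumZl (T : choiceType) (I : set T) (a : T -> \bar R) (r : R) :
  (0 <= r)%R -> (forall i, 0 <= a i) ->
  \esum_(i in I) (r%:E * a i) = r%:E * \esum_(i in I) a i.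
Proof.
move=> r0 a0; rewrite /esum -ereal_supZl //; last first.
  by apply/set0P; exists (\sum_(x \in set0) a x); exists set0 => //; exact: fsets_set0.
congr ereal_sup; apply/seteqP; split => y /=.
  by move=> [A IA <-]; exists (\sum_(x \in A) a x); [exists A|rewrite ge0_mule_fsumr].
by move=> [_ [A IA <-] <-]; exists A => //; rewrite ge0_mule_fsumr.
Qed.

Lemma esumZl_fin (T : choiceType) (I : set T) (a : T -> \bar R) (x : \bar R) :
  x \is a fin_num -> 0 <= x -> (forall i, 0 <= a i) ->
  \esum_(i in I) (x * a i) = x * \esum_(i in I) a i.
Proof.
move=> xf x0 a0; rewrite -(fineK xf) esumZl //; by rewrite -lee_fin fineK.
Qed.

Lemma esum_swap (T1 T2 : choiceType) (a : T1 -> T2 -> \bar R) :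
  (forall i j, 0 <= a i j) ->
  \esum_(i in [set: T1]) \esum_(j in [set: T2]) a i j =
  \esum_(j in [set: T2]) \esum_(i in [set: T1]) a i j.
Proof.
move=> a0; rewrite !esum_esum //.
rewrite (reindex_esum ([set: T2] `*`` (fun=> [set: T1])) _ (fun x => (x.2, x.1)))//.
split=> //=.
by move=> [i1 i2] [j1 j2] /= _ _ [] -> ->.
by move=> [i1 i2] _ /=; exists (i2, i1).
Qed.

Lemma esum_single (T : choiceType) (a : T -> \bar R) z :
  (forall i, i != z -> a i = 0) -> 0 <= a z ->
  \esum_(i in [set: T]) a i = a z.
Proof.
move=> az a0.
rewrite (esumID [set z]); last first.
  by move=> i _; have [->//|/az ->] := eqVneq i z.
rewrite setTI esum_set1 // esum1 ?adde0 // => i [_ /eqP iz]; exact: az.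
Qed.

End H.

Section G.
Local Open Scope ereal_scope.
Context {R : realType} {d : nat} (mu : 'rV[int]_d -> R) (hmu : is_jump_distr mu).

Lemma G_ge0 n w : 0 <= conv_pow mu n w.
Proof.
elim: n w => [|n IH] w /=; first by rewrite lee_fin ler0n.
by apply: esum_ge0 => y _; apply: mule_ge0 => //; rewrite lee_fin; case: hmu.
Qed.

Lemma G_le1 n w : conv_pow mu n w <= 1.
Proof.
elim: n w => [|n IH] w /=; first by rewrite lee_fin; case: (w == 0%R).
case: hmu => mu0 <-; apply: le_esum => y _.
by rewrite -[X in _ <= X]mul1e; apply: lee_wpmul2r => //; rewrite lee_fin.
Qed.

Lemma G_fin n w : conv_pow mu n w \is a fin_num.
Proof.
by rewrite ge0_fin_numE ?G_ge0 // (le_lt_trans (G_le1 n w)) // ltry.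
Qed.

Lemma G_conv m n x z :
  \esum_(y in [set: 'rV[int]_d]) (conv_pow mu m (x - y)%R * conv_pow mu n (y - z)%R)
  = conv_pow mu (m + n) (x - z)%R.
Proof.
have mu0 : forall u, 0 <= (mu u)%:E by move=> u; rewrite lee_fin; case: hmu.
elim: n z => [|n IH] z.
  rewrite addn0 (@esum_single R _ _ z).
    by rewrite /= subrr eqxx mule1.
  by move=> i iz; rewrite /= subr_eq0 (negbTE iz) mule0.
  by rewrite /= subrr eqxx mule1 G_ge0.
rewrite addnS /=.
transitivity (\esum_(y in [set: 'rV[int]_d]) \esum_(u in [set: 'rV[int]_d])
   (conv_pow mu m (x - y)%R * (conv_pow mu n (y - z - u)%R * (mu u)%:E))).
  apply: eq_esum => y _; rewrite esumZl_fin ?G_fin ?G_ge0 //.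
  by move=> u; apply: mule_ge0; rewrite ?G_ge0.
rewrite esum_swap; last by move=> i j; rewrite !mule_ge0 ?G_ge0.
apply: eq_esum => u _.
have -> : (x - z - u = x - (z + u))%R by rewrite opprD addrA.
rewrite muleC -IH -esumZl_fin ?fin_numE //; last first.
  by move=> i; rewrite mule_ge0 ?G_ge0.
apply: eq_esum => y _.
by rewrite opprD addrA (muleC (mu u)%:E) muleA. Qed.

End G.

Section C.
Context {R : realType}.
Definition cc (a : R) (n : nat) : R := expR (- a) * a ^+ n / (n`!)%:R.

Lemma cc_ge0 a n : 0 <= a -> 0 <= cc a n.
Proof. by move=> a0; rewrite /cc divr_ge0 // mulr_ge0 ?expR_ge0 ?exprn_ge0. Qed.

Lemma sum_cc a : 0 <= a -> (\esum_(n in [set: nat]) (cc a n)%:E = 1)%E.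
Proof.
move=> a0.
transitivity (\esum_(n in [set: nat]) ((expR (- a))%:E * (exp_coeff a n)%:E))%E.
  by apply: eq_esum => n _; rewrite /cc /exp_coeff /= -EFinM mulrA.
rewrite esumZl ?expR_ge0 //; last by move=> n; rewrite lee_fin exp_coeff_ge0.
rewrite -nneseries_esumT; last by move=> n; rewrite lee_fin exp_coeff_ge0.
transitivity ((expR (- a))%:E * limn (EFin \o series (exp_coeff a)))%E.
  by congr (_ * _)%E; apply/congr_lim/funext => n /=; rewrite /series /= sumEFin.
rewrite EFin_lim; last exact: is_cvg_series_exp_coeff.
by rewrite -[limn _]/(expR a) -EFinM mulrC expRxMexpNx_1.
Qed.

Lemma cc_binom a b k :
  \sum_(i < k.+1) cc a i * cc b (k - i) = cc (a + b) k.
Proof.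
rewrite /cc opprD expRD (addrC a b) exprDn mulr_sumr mulr_suml.
apply: eq_bigr => i _.
have ik : (i <= k)%N by rewrite -ltnS.
rewrite -(bin_fact ik) !natrM -mulr_natr.
have h1 : ('C(k, i))%:R != 0 :> R by rewrite pnatr_eq0 -lt0n bin_gt0.
have h2 : (i`!)%:R != 0 :> R by rewrite pnatr_eq0 -lt0n fact_gt0.
have h3 : ((k - i)`!)%:R != 0 :> R by rewrite pnatr_eq0 -lt0n fact_gt0.
by field; rewrite h1 h2 h3.
Qed.

Lemma regroup (f : nat -> nat -> \bar R) : (forall m n, 0 <= f m n)%E ->
  \esum_(m in [set: nat]) \esum_(n in [set: nat]) f m n
  = \esum_(k in [set: nat]) \sum_(i < k.+1) f i (k - i)%N.
Proof.
move=> f0.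
transitivity (\esum_(k in [set: nat]) \esum_(i in `I_k.+1) f i (k - i)%N).
  rewrite !esum_esum //.
  rewrite (reindex_esum ([set: nat] `*`` (fun k => `I_k.+1)) ([set: nat] `*`` (fun=> [set: nat]))
     (fun p => (p.2, p.1 - p.2)%N)) //.
  split => //=.
  - move=> [k1 i1] [k2 i2]; rewrite !inE /= => -[_ h1] [_ h2] [e1 e2].
    subst i2; congr pair; move: h1 h2 e2; rewrite /= => h1 h2 e2; lia.
  - move=> [m n] _; exists (m + n, m)%N.
    by split => //; rewrite /= ltnS leq_addr.
    by rewrite /= addKn.
apply: eq_esum => k _.
by rewrite esum_fset ?finite_II // -fsbig_ord.
Qed.
End C.

Section P.
Local Open Scope ereal_scope.
Context {R : realType} {d : nat} (mu : 'rV[int]_d -> R) (hmu : is_jump_distr mu).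
Let G0 := @G_ge0 R d mu hmu.
Let G1 := @G_le1 R d mu hmu.
Let Gf := @G_fin R d mu hmu.
Let Gc := @G_conv R d mu hmu.

Definition PP (a : R) (w : 'rV[int]_d) : \bar R :=
  \esum_(n in [set: nat]) ((cc a n)%:E * conv_pow mu n w).

Lemma PP_ge0 a w : (0 <= a)%R -> 0 <= PP a w.
Proof.
by move=> a0; apply: esum_ge0 => n _; rewrite mule_ge0 ?G0 // lee_fin cc_ge0.
Qed.

Lemma PP_le1 a w : (0 <= a)%R -> PP a w <= 1.
Proof.
move=> a0; rewrite -(sum_cc a a0); apply: le_esum => n _.
by rewrite -[X in _ <= X]mule1; apply: lee_wpmul2l; rewrite ?lee_fin ?cc_ge0 ?G1.
Qed.

Lemma PP_fin a w : (0 <= a)%R -> PP a w \is a fin_num.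
Proof.
by move=> a0; rewrite ge0_fin_numE ?PP_ge0 // (le_lt_trans (PP_le1 a w a0)) // ltry.
Qed.

Lemma CK a b x z : (0 <= a)%R -> (0 <= b)%R ->
  \esum_(y in [set: 'rV[int]_d]) (PP a (x - y)%R * PP b (y - z)%R) = PP (a + b) (x - z)%R.
Proof.
move=> a0 b0.
have Ga : forall m w, 0 <= (cc a m)%:E * conv_pow mu m w.
  by move=> m w; rewrite mule_ge0 ?G0 // lee_fin cc_ge0.
have Gb : forall m w, 0 <= (cc b m)%:E * conv_pow mu m w.
  by move=> m w; rewrite mule_ge0 ?G0 // lee_fin cc_ge0.
transitivity (\esum_(y in [set: 'rV[int]_d]) \esum_(m in [set: nat]) \esum_(n in [set: nat])
   (((cc a m)%:E * conv_pow mu m (x - y)%R) * ((cc b n)%:E * conv_pow mu n (y - z)%R))).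
  apply: eq_esum => y _.
  rewrite /PP muleC -esumZl_fin ?PP_fin ?PP_ge0 //.
  apply: eq_esum => m _.
  rewrite muleC -esumZl_fin //.
  by rewrite fin_numM // ?Gf.
rewrite esum_swap; last by move=> i j; apply: esum_ge0 => n _; rewrite mule_ge0.
transitivity (\esum_(m in [set: nat]) \esum_(n in [set: nat])
   ((cc a m * cc b n)%:E * conv_pow mu (m + n) (x - z)%R)).
  apply: eq_esum => m _.
  rewrite esum_swap; last by move=> i j; rewrite mule_ge0.
  apply: eq_esum => n _.
  rewrite -Gc // -esumZl; last 2 first.
      by rewrite mulr_ge0 ?cc_ge0.
    by move=> y; rewrite mule_ge0 ?G0.
  apply: eq_esum => y _.
  by rewrite EFinM muleACA.
rewrite regroup; last by move=> m n; rewrite mule_ge0 ?G0 // lee_fin mulr_ge0 ?cc_ge0.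
apply: eq_esum => k _.
transitivity (\sum_(i < k.+1) ((cc a i * cc b (k - i))%:E * conv_pow mu k (x - z)%R)).
  apply: eq_bigr => i _; congr (_ * _); congr conv_pow.
  by rewrite subnKC // -ltnS.
rewrite -ge0_sume_distrl; last by move=> i _; rewrite lee_fin mulr_ge0 ?cc_ge0.
by rewrite sumEFin cc_binom.
Qed.

End P.

Theorem lemma3p3 (R : realType) (d : nat) (lam : R) (mu : 'rV[int]_d -> R)
  (hlam : 0 < lam) (hmu : is_jump_distr mu)
  (t s : R) (ht : 0 <= t) (hs : 0 <= s) (x z : 'rV[int]_d) :
  (\esum_(y in [set: 'rV[int]_d])
      ((ctrw_p lam mu t (x - y) * ctrw_p lam mu s (y - z)) ^+ 2)%:E
   <= ((ctrw_p lam mu (t + s) (x - z)) ^+ 2)%:E)%E.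
Proof.
have a0 : 0 <= lam * t by rewrite mulr_ge0 // ltW.
have b0 : 0 <= lam * s by rewrite mulr_ge0 // ltW.
have -> : ctrw_p lam mu (t + s) (x - z) = fine (PP mu (lam * t + lam * s) (x - z)).
  by rewrite -mulrDr.
rewrite -(@CK R d mu hmu _ _ x z a0 b0).
set Q := (\esum_(y in _) (PP _ _ _ * PP _ _ _))%E.
have Qf : Q \is a fin_num by rewrite /Q CK // PP_fin // addr_ge0.
have Q0 : (0 <= Q)%E by rewrite /Q CK // PP_ge0 // addr_ge0.
have eAB y : ((ctrw_p lam mu t (x - y) * ctrw_p lam mu s (y - z))%:E =
    PP mu (lam * t) (x - y) * PP mu (lam * s) (y - z))%E.
  by rewrite EFinM /ctrw_p -/(PP mu (lam * t) _) -/(PP mu (lam * s) _) !fineK ?PP_fin.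
have le1 y : ((ctrw_p lam mu t (x - y) * ctrw_p lam mu s (y - z))%:E <= Q)%E.
  rewrite eAB /Q; apply: esum_ge; exists [set y].
    by split => //; exact: finite_set1.
  by rewrite fsbig_set1.
apply: (@le_trans _ _ (\esum_(y in [set: 'rV[int]_d])
   ((fine Q)%:E * (ctrw_p lam mu t (x - y) * ctrw_p lam mu s (y - z))%:E))%E).
  apply: le_esum => y _.
  rewrite -EFinM lee_fin expr2 ler_wpM2r //.
    by rewrite mulr_ge0 // fine_ge0 // PP_ge0.
  by rewrite -lee_fin fineK.
rewrite esumZl ?fine_ge0 //; last first.
  by move=> y; rewrite eAB mule_ge0 ?PP_ge0.
under eq_esum do rewrite eAB.
by rewrite -/Q -{2}(fineK Qf) -EFinM expr2.
Qed.
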